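(* Let $A \in \mathbb{R}^{m \times n}$, let $Q \subset \mathbb{R}^m$ be closed and convex such that the collection $\{Q,\mathcal{R}(A)\}$ is boundedly linearly regular, and let $C=\{x \in \mathbb{R}^n : Ax \in Q\}$. Then for every $R>0$ there exists $\gamma>0$ such that for all $x \in \mathbb{R}^n$ with $\|x\|_2\le R$, \[ \operatorname{dist}(x,C) \le \gamma \cdot \operatorname{dist}(Ax, Q). \]
   Context: $\mathcal{R}(A)$ denotes the range of $A$; $\operatorname{dist}$ denotes Euclidean distance to a set. A collection of closed convex sets $C_1,\dots,C_r\subset\mathbb{R}^m$ with nonempty intersection $D=\bigcap_i C_i$ is boundedly linearly regular if for every $R>0$ there is $\gamma>0$ such that $\operatorname{dist}(y,D)^2\le\gamma\sum_{i=1}^r\operatorname{dist}(y,C_i)^2$ for all $y$ with $\|y\|_2\le R$. (In particular bounded linear regularity of $\{Q,\mathcal{R}(A)\}$ includes $Q\cap\mathcal{R}(A)\neq\emptyset$.) *)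

(* Defs.v *)
From HB Require Import structures.
From mathcomp Require Import all_boot all_order all_algebra.
From mathcomp Require Import all_classical all_reals all_analysis.
Set Implicit Arguments. Unset Strict Implicit. Unset Printing Implicit Defensive.
Import Order.TTheory GRing.Theory Num.Theory.
Local Open Scope ring_scope.
Local Open Scope classical_set_scope.

Section Defs.
Variable R : realType.

Definition eucl_norm k (x : 'cV[R]_k) : R := Num.sqrt (\sum_(i < k) x i 0 ^+ 2).

Definition eucl_dist k (x : 'cV[R]_k) (S : set 'cV[R]_k) : R :=
  inf [set eucl_norm (x - y) | y in S].

Definition mxrange m n (A : 'M[R]_(m, n)) : set 'cV[R]_m :=
  [set A *m x | x in [set: 'cV[R]_n]].

Definition boundedly_linearly_regular k (Cs : seq (set 'cV[R]_k)) : Prop :=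
  let D := \big[setI/setT]_(C <- Cs) C in
  D !=set0 /\
  forall rad : R, 0 < rad -> exists gamma : R, 0 < gamma /\
    forall y : 'cV[R]_k, eucl_norm y <= rad ->
      eucl_dist y D ^+ 2 <= gamma * \sum_(C <- Cs) eucl_dist y C ^+ 2.
End Defs.

(* Main.v *)
Require Import Defs.
From HB Require Import structures.
From mathcomp Require Import all_boot all_order all_algebra.
From mathcomp Require Import all_classical all_reals all_analysis.
Set Implicit Arguments. Unset Strict Implicit. Unset Printing Implicit Defensive.
Import Order.TTheory GRing.Theory Num.Theory.
Local Open Scope ring_scope.
Local Open Scope classical_set_scope.

Section Helpers.
Variable R : realType.

Definition sqn k (x : 'cV[R]_k) : R := \sum_(i < k) x i 0 ^+ 2.

Lemma sqn_ge0 k (x : 'cV[R]_k) : 0 <= sqn x.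
Proof. by apply: sumr_ge0 => i _; rewrite sqr_ge0. Qed.

Lemma norm_ge0 k (x : 'cV[R]_k) : 0 <= eucl_norm x.
Proof. exact: sqrtr_ge0. Qed.

Lemma normN k (x : 'cV[R]_k) : eucl_norm (- x) = eucl_norm x.
Proof. by rewrite /eucl_norm; congr Num.sqrt; apply: eq_bigr => i _; rewrite mxE sqrrN. Qed.

Lemma norm0 k : eucl_norm (0 : 'cV[R]_k) = 0.
Proof. by rewrite /eucl_norm big1 ?sqrtr0 // => i _; rewrite mxE expr0n. Qed.

Lemma sqr_le_norm (a b : R) : 0 <= b -> a ^+ 2 <= b ^+ 2 -> `|a| <= b.
Proof.
move=> b0 h; rewrite -sqrtr_sqr -[b](@ger0_norm _ b) // -sqrtr_sqr.
exact: ler_wsqrtr.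
Qed.

Lemma coord_le k (x : 'cV[R]_k) j : `|x j 0| <= eucl_norm x.
Proof.
apply: sqr_le_norm; first exact: norm_ge0.
rewrite sqr_sqrtr; last exact: sqn_ge0.
rewrite (bigD1 j) //= lerDl; apply: sumr_ge0 => i _; exact: sqr_ge0.
Qed.

Lemma mx_bound p q (B : 'M[R]_(p, q)) :
  exists M, 0 <= M /\ forall x, eucl_norm (B *m x) <= M * eucl_norm x.
Proof.
pose c i := \sum_(j < q) `|B i j|.
have c0 i : 0 <= c i by apply: sumr_ge0 => j _.
pose K := \sum_(i < p) c i ^+ 2.
have K0 : 0 <= K by apply: sumr_ge0 => i _; exact: sqr_ge0.
exists (Num.sqrt K); split; first exact: sqrtr_ge0.
move=> x; rewrite /eucl_norm -sqrtrM //; apply: ler_wsqrtr.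
rewrite mulr_suml; apply: ler_sum => i _.
have h : `|(B *m x) i 0| <= c i * eucl_norm x.
  rewrite mxE /c mulr_suml; apply: le_trans (ler_norm_sum _ _ _) _.
  apply: ler_sum => j _; rewrite normrM; apply: ler_wpM2l => //.
  exact: coord_le.
have : `|(B *m x) i 0| ^+ 2 <= (c i * eucl_norm x) ^+ 2.
  by apply: lerXn2r => //; rewrite ?nnegrE //; apply: mulr_ge0 => //; exact: norm_ge0.
by rewrite real_normK ?num_real // exprMn sqr_sqrtr //; exact: sqn_ge0.
Qed.

Lemma dist_le k (S : set 'cV[R]_k) x y : S y -> eucl_dist x S <= eucl_norm (x - y).
Proof.
move=> Sy; apply: ge_inf; last by exists y.
by exists 0 => _ [z _ <-]; exact: norm_ge0.
Qed.

Lemma dist_lb k (S : set 'cV[R]_k) x c : S !=set0 ->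
  (forall y, S y -> c <= eucl_norm (x - y)) -> c <= eucl_dist x S.
Proof.
move=> [y Sy] h; apply: lb_le_inf; first by exists (eucl_norm (x - y)), y.
by move=> _ [z Sz <-]; exact: h.
Qed.

Lemma dist_ge0 k (S : set 'cV[R]_k) x : S !=set0 -> 0 <= eucl_dist x S.
Proof. by move=> ne; apply: dist_lb => // y _; exact: norm_ge0. Qed.

Lemma dist_mem k (S : set 'cV[R]_k) x : S x -> eucl_dist x S = 0.
Proof.
move=> Sx; apply/le_anti; rewrite dist_ge0 ?andbT; last by exists x.
by have := dist_le x Sx; rewrite subrr norm0.
Qed.

End Helpers.
Theorem lemma3p7 (R : realType) (m n : nat) (A : 'M[R]_(m, n))
  (Q : set 'cV[R]_m) :
  closed (Q : set 'cV[R^o]_m) -> convex_set Q ->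
  boundedly_linearly_regular [:: Q; mxrange A] ->
  let C := [set x : 'cV[R]_n | Q (A *m x)] in
  forall rad : R, 0 < rad -> exists gamma : R, 0 < gamma /\
    forall x : 'cV[R]_n, eucl_norm x <= rad ->
      eucl_dist x C <= gamma * eucl_dist (A *m x) Q.
Proof.
move=> _ _ [ne H] C rad rad0.
rewrite /= !big_cons big_nil setIT in ne H.
have [M1 [M10 hM1]] := mx_bound A.
pose P := (pinvmx A^T)^T.
have [M2 [M20 hM2]] := mx_bound P.
have r0 : 0 < M1 * rad + 1 by rewrite ltr_wpDl // mulr_ge0 // ltW.
have [g [g0 hg]] := H _ r0.
have kap0 : 0 < M2 + 1 by rewrite ltr_wpDl.
exists ((M2 + 1) * Num.sqrt g); split; first by rewrite mulr_gt0 // sqrtr_gt0.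
move=> x hx.
have neQ : Q !=set0 by case: ne => y [Qy _]; exists y.
have step1 : eucl_dist (A *m x) (Q `&` mxrange A) <= Num.sqrt g * eucl_dist (A *m x) Q.
  have hAx : eucl_norm (A *m x) <= M1 * rad + 1.
    apply: le_trans (hM1 x) _; apply: (@le_trans _ _ (M1 * rad)).
      by apply: ler_wpM2l.
    by rewrite lerDl.
  have := hg _ hAx.
  rewrite !big_cons big_nil (@dist_mem _ _ (mxrange A)); last by exists x.
  rewrite expr0n /= addr0 addr0 => h.
  have d0 := dist_ge0 (A *m x) ne.
  have q0 := dist_ge0 (A *m x) neQ.
  rewrite -(ger0_norm d0); apply: sqr_le_norm; first by rewrite mulr_ge0 ?sqrtr_ge0.
  by rewrite exprMn sqr_sqrtr ?(ltW g0).
have step2 : eucl_dist x C <= (M2 + 1) * eucl_dist (A *m x) (Q `&` mxrange A).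
  rewrite mulrC -ler_pdivrMr //; apply: dist_lb => // y [Qy [u _ yu]].
  rewrite ler_pdivrMr // mulrC.
  pose v := y - A *m x.
  pose w := P *m v.
  have Aw : A *m w = v.
    have sub : (v^T <= A^T)%MS.
      by rewrite /v -yu -mulmxBr trmx_mul submxMl.
    have := mulmxKpV sub.
    move/(congr1 trmx); rewrite trmxK => <-.
    by rewrite /w /P !trmx_mul !trmxK.
  have Cxw : C (x + w) by rewrite /C /= mulmxDr Aw /v addrC subrK.
  apply: le_trans (dist_le x Cxw) _.
  rewrite opprD addrA subrr add0r normN.
  apply: le_trans (hM2 v) _.
  rewrite /v -normN opprB.
  by apply: ler_wpM2r; [exact: norm_ge0 | rewrite lerDl].
apply: le_trans step2 _.
by rewrite -mulrA; apply: ler_wpM2l => //; exact: ltW.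
Qed.
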